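(* Let $\mathcal X$ be an instance space, $A,B$ two disjoint groups with $\Pr[x\in B]=r\in(0,1)$, $\mathcal D_A,\mathcal D_B$ distributions on $\mathcal X$, and $h_A^*,h_B^*:\mathcal X\to\{0,1\}$ with $p:=\Pr_{\mathcal D_A}[h_A^*(x)=1]=\Pr_{\mathcal D_B}[h_B^*(x)=1]\in(0,1]$. Let $\eta\in[0,1/2)$, $\beta_{POS},\beta_{NEG}\in(0,1]$, $\nu\in[0,1)$. Then $h^*=(h_A^*,h_B^* )$ satisfies Equal Opportunity on the biased data distribution described in the context.
   Context: True distribution: group $B$ with probability $r$ (then $x\sim\mathcal D_B$), else group $A$ ($x\sim\mathcal D_A$); for $x$ of group $g$ the true label is $y=1-h_g^*(x)$ with probability $\eta$ and $y=h_g^*(x)$ otherwise, independently. Biased distribution: each true example with $x\in B,y=1$ is kept with probability $\beta_{POS}$, each with $x\in B,y=0$ is kept with probability $\beta_{NEG}$, group-$A$ examples are always kept; then each kept example with $x\in B$ and $y=1$ has its label flipped to $0$ independently with probability $\nu$; the biased distribution is the distribution of kept examples with observed labels. A pair $h=(h_A,h_B)$ satisfies Equal Opportunity on a distribution if $\Pr[h_A(x)=1\mid y=1,x\in A]=\Pr[h_B(x)=1\mid y=1,x\in B]$ under that distribution. *)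

(* Defs.v *)
From HB Require Import structures.
From mathcomp Require Import all_boot all_order all_algebra.
From mathcomp Require Import all_classical all_reals all_analysis.
Set Implicit Arguments. Unset Strict Implicit. Unset Printing Implicit Defensive.
Import Order.TTheory GRing.Theory Num.Theory.
Local Open Scope classical_set_scope.
Local Open Scope ring_scope.

(* Outcomes are triples (g, x, y): g = true means group B, g = false group A;
   x the instance; y the (observed) label. *)

Section Fairness.
Variables (R : realType) (d : measure_display) (X : measurableType d).

Definition outcome := (bool * X * bool)%type.

(* Pr[true label = y | x], given the ground-truth label hx = h_g^*(x). *)
Definition noiseP (eta : R) (hx y : bool) : R :=
  if y == hx then 1 - eta else eta.

(* probability that an example of group B with true label y is kept *)
Definition keepP (bPos bNeg : R) (y : bool) : R := if y then bPos else bNeg.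

(* Pr[observed label = yo | true label y] for group B *)
Definition obsP (nu : R) (y yo : bool) : R :=
  if y then (if yo then 1 - nu else nu) else (if yo then 0 else 1).

Definition biasedMass (r eta bPos bNeg nu : R)
  (DA DB : probability X R) (hA hB : X -> bool) (S : set outcome) : R :=
  r * Rintegral DB setT (fun x =>
        \sum_(y : bool) noiseP eta (hB x) y * keepP bPos bNeg y *
          \sum_(yo : bool) obsP nu y yo * \1_S (true, x, yo))
  + (1 - r) * Rintegral DA setT (fun x =>
        \sum_(y : bool) noiseP eta (hA x) y * \1_S (false, x, y)).

(* The biased distribution: distribution of kept examples with observed
   labels (the sampling mass conditioned on being kept). *)
Definition biasedDist (r eta bPos bNeg nu : R)
  (DA DB : probability X R) (hA hB : X -> bool) (S : set outcome) : R :=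
  biasedMass r eta bPos bNeg nu DA DB hA hB S /
  biasedMass r eta bPos bNeg nu DA DB hA hB setT.

Definition condProb (P : set outcome -> R) (E C : set outcome) : R :=
  P (E `&` C) / P C.

Definition equalOpportunity (P : set outcome -> R) (hA hB : X -> bool) : Prop :=
  condProb P [set t : outcome | hA t.1.2] [set t : outcome | t.2 /\ t.1.1 = false] =
  condProb P [set t : outcome | hB t.1.2] [set t : outcome | t.2 /\ t.1.1 = true].

End Fairness.

(* Main.v *)
Require Import Defs.
From HB Require Import structures.
From mathcomp Require Import all_boot all_order all_algebra.
From mathcomp Require Import all_classical all_reals all_analysis.
Import Order.TTheory GRing.Theory Num.Theory.
Local Open Scope classical_set_scope.
Local Open Scope ring_scope.
From mathcomp Require Import ring lra.
Lemma int_ind (R : realType) (d : measure_display) (X : measurableType d)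
  (P : probability X R) (A : set X) (mA : measurable A) (a b : R) :
  Rintegral P setT (fun x => a * \1_A x + b) = a * fine (P A) + b.
Proof.
have hi := integrable_indic P mA.
have mT : measurable (@setT X) by [].
rewrite RintegralD //; last first.
  by apply: finite_measure_integrable_cst.
  have := integrableZl measurableT a hi.
  by apply: eq_integrable => // x _.
rewrite RintegralZl //.
rewrite Rintegral_cst // [X in b * fine X](_ : _ = 1%E); last exact: probability_setT.
rewrite /= mulr1.
congr (_ * _ + _).
rewrite /Rintegral integral_indic // setIT //.
Qed.

Lemma int_ind' (R : realType) (d : measure_display) (X : measurableType d)
  (P : probability X R) (A : set X) (mA : measurable A) (a b : R) (f : X -> R) :
  (forall x, f x = a * \1_A x + b) ->
  Rintegral P setT f = a * fine (P A) + b.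
Proof.
move=> hf; rewrite -int_ind //; congr Rintegral; apply: funext => x; exact: hf.
Qed.

Lemma indic_bool (T : Type) (R : realType) (b : T -> bool) t0 :
  \1_(fun t => is_true (b t)) t0 = (b t0)%:R :> R.
Proof.
rewrite indicE; case hb: (b t0).
  by rewrite mem_set.
by rewrite memNset // hb.
Qed.

Lemma setEA (X : Type) (h : X -> bool) (g0 : bool) :
  [set t : bool * X * bool | h t.1.2] `&` [set t | is_true t.2 /\ t.1.1 = g0]
  = (fun t => is_true (h t.1.2 && t.2 && (t.1.1 == g0))).
Proof.
apply/seteqP; split => -[[g x] y] /=.
  by move=> [-> [-> ->]]; rewrite eqxx.
by case/andP => /andP[-> ->] /eqP.
Qed.

Lemma setEC (X : Type) (g0 : bool) :
  [set t : bool * X * bool | is_true t.2 /\ t.1.1 = g0]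
  = (fun t => is_true (t.2 && (t.1.1 == g0))).
Proof.
apply/seteqP; split => -[[g x] y] /=.
  by move=> [-> ->]; rewrite eqxx.
by case/andP => -> /eqP.
Qed.

Theorem mainTheorem3 (R : realType) (d : measure_display) (X : measurableType d)
  (DA DB : probability X R) (hA hB : X -> bool)
  (r p eta bPos bNeg nu : R) :
  0 < r < 1 ->
  measurable [set x | hA x] -> measurable [set x | hB x] ->
  DA [set x | hA x] = p%:E -> DB [set x | hB x] = p%:E ->
  0 < p <= 1 ->
  0 <= eta < 2^-1 ->
  0 < bPos <= 1 -> 0 < bNeg <= 1 ->
  0 <= nu < 1 ->
  equalOpportunity (biasedDist r eta bPos bNeg nu DA DB hA hB) hA hB.
Proof.
move=> /andP[r0 r1] mA mB pA pB /andP[p0 p1] /andP[e0 e1] /andP[bP0 bP1] _ /andP[n0 n1].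
rewrite /equalOpportunity /condProb /biasedDist.
set Z := biasedMass _ _ _ _ _ _ _ _ _ setT.
rewrite !setEA !setEC /biasedMass.
have pt : forall (f : X -> R) a b, (forall x, f x = a * \1_[set x | hB x] x + b) -> forall x, f x = a * \1_[set x | hB x] x + b by [].
rewrite (@int_ind' _ _ _ DB _ mB (0) (0)); last first.
  move=> x; rewrite !big_bool /= !indic_bool /=; case: (hA x); case: (hB x); rewrite /noiseP /keepP /obsP /=; ring.
rewrite (@int_ind' _ _ _ DA _ mA (1-eta) (0)); last first.
  move=> x; rewrite !big_bool /= !indic_bool /=; case: (hA x); case: (hB x); rewrite /noiseP /keepP /obsP /=; ring.
rewrite (@int_ind' _ _ _ DB _ mB (0) (0)); last first.
  move=> x; rewrite !big_bool /= !indic_bool /=; case: (hA x); case: (hB x); rewrite /noiseP /keepP /obsP /=; ring.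
rewrite (@int_ind' _ _ _ DA _ mA (1-eta-eta) (eta)); last first.
  move=> x; rewrite !big_bool /= !indic_bool /=; case: (hA x); case: (hB x); rewrite /noiseP /keepP /obsP /=; ring.
rewrite (@int_ind' _ _ _ DB _ mB ((1-eta)*bPos*(1-nu)) (0)); last first.
  move=> x; rewrite !big_bool /= !indic_bool /=; case: (hA x); case: (hB x); rewrite /noiseP /keepP /obsP /=; ring.
rewrite (@int_ind' _ _ _ DA _ mA (0) (0)); last first.
  move=> x; rewrite !big_bool /= !indic_bool /=; case: (hA x); case: (hB x); rewrite /noiseP /keepP /obsP /=; ring.
rewrite (@int_ind' _ _ _ DB _ mB ((1-eta-eta)*bPos*(1-nu)) (eta*bPos*(1-nu))); last first.
  move=> x; rewrite !big_bool /= !indic_bool /=; case: (hA x); case: (hB x); rewrite /noiseP /keepP /obsP /=; ring.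
rewrite (@int_ind' _ _ _ DA _ mA (0) (0)); last first.
  move=> x; rewrite !big_bool /= !indic_bool /=; case: (hA x); case: (hB x); rewrite /noiseP /keepP /obsP /=; ring.
rewrite pA pB /=.
have h2 : 0 < 1 - eta - eta by lra.
have q0 : 0 < (1 - eta - eta) * p + eta by have := mulr_gt0 h2 p0; lra.
have n0' : 0 < 1 - nu by lra.
have r1' : 0 < 1 - r by lra.
have hq : (r * (0 * p + 0) + (1 - r) * ((1 - eta - eta) * p + eta)) != 0.
  rewrite mul0r !addr0 mulr0 add0r; apply/lt0r_neq0; exact: mulr_gt0.
have hq' : (r * ((1 - eta - eta) * bPos * (1 - nu) * p + eta * bPos * (1 - nu)) +
    (1 - r) * (0 * p + 0)) != 0.
  have -> : (1 - eta - eta) * bPos * (1 - nu) * p + eta * bPos * (1 - nu) = ((1 - eta - eta) * p + eta) * (bPos * (1 - nu)) by ring.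
  rewrite mul0r !addr0 mulr0 addr0; apply/lt0r_neq0; apply: mulr_gt0 => //; apply: mulr_gt0 => //; exact: mulr_gt0.
case: (eqVneq Z 0) => [->|Z0]; first by rewrite !invr0 !mulr0 !mul0r.
rewrite -!mulf_div ?divff ?invr_eq0 // ?mulr1.
by apply/eqP; rewrite eqr_div //; apply/eqP; ring.
Qed.
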